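(* Let $G$ be a maximal outerplanar graph of order $n\geq 3$. Then $\gamma_{\times 2}(G)\leq \lfloor \frac{2n}{3}\rfloor$. *)

(* Defs.v *)
(* Simple graphs on a finite vertex type T given by a
   symmetric irreflexive boolean relation e. *)
From mathcomp Require Import all_boot.
Set Implicit Arguments. Unset Strict Implicit. Unset Printing Implicit Defensive.

(* Two chords {a,b} and {c,d} of points placed (in this cyclic order) on a
   circle at positions a,b,c,d : nat cross iff exactly one of c,d lies
   strictly inside the arc between a and b and the other strictly outside. *)
Definition chords_cross (a b c d : nat) : bool :=
  let x := minn a b in let y := maxn a b in
  let inside z := (x < z) && (z < y) in
  let outside z := (z < x) || (y < z) in
  (inside c && outside d) || (inside d && outside c).

(* Outerplanar: the vertices can be placed on a circle (injective
   cyclic ordering f) so that no two edges, drawn as straight chords,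
   cross, i.e. there is a planar drawing with every vertex on the outer face. *)
Definition outerplanar (T : finType) (e : rel T) : Prop :=
  exists f : T -> nat, injective f /\
    forall a b c d : T, e a b -> e c d -> ~~ chords_cross (f a) (f b) (f c) (f d).

Definition add_edge (T : eqType) (e : rel T) (x y : T) : rel T :=
  fun u v => [|| e u v, (u == x) && (v == y) | (u == y) && (v == x)].

Definition maximal_outerplanar (T : finType) (e : rel T) : Prop :=
  outerplanar e /\
  forall x y : T, x != y -> ~~ e x y -> ~ outerplanar (add_edge e x y).

Definition closed_nbhd (T : finType) (e : rel T) (v : T) : {set T} :=
  [set u | (u == v) || e v u].

Definition double_dominating (T : finType) (e : rel T) (S : {set T}) : bool :=
  [forall v, 2 <= #|closed_nbhd e v :&: S|].

(* Double domination number: minimum size of a double dominating set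
   (default #|T| if none exists, which never happens without isolated
   vertices). *)
Definition double_domination_number (T : finType) (e : rel T) : nat :=
  \big[minn/#|T|]_(S : {set T} | double_dominating e S) #|S|.

(* Main.v *)
Require Import Defs.
From mathcomp Require Import all_boot.
From mathcomp Require Import zify.

Set Implicit Arguments. Unset Strict Implicit. Unset Printing Implicit Defensive.

Lemma cross_sym a b c d : chords_cross a b c d = chords_cross c d a b.
Proof. rewrite /chords_cross. apply/idP/idP; timeout 15 lia. Qed.
Lemma cross_swap a b c d : chords_cross a b c d = chords_cross b a c d.
Proof. rewrite /chords_cross. apply/idP/idP; timeout 15 lia. Qed.
Lemma cross_same a b : ~~ chords_cross a b a b /\ ~~ chords_cross a b b a.
Proof. rewrite /chords_cross. split; apply/negP; timeout 15 lia. Qed.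
Lemma cross_cases x y a b : chords_cross x y a b -> x < y ->
  (x < a < y /\ (b < x \/ y < b)) \/ (x < b < y /\ (a < x \/ y < a)).
Proof. rewrite /chords_cross. timeout 15 lia. Qed.
Lemma cross_intro x y a b : x < a < y -> (b < x \/ y < b) -> chords_cross x y a b.
Proof. rewrite /chords_cross. timeout 15 lia. Qed.
Lemma cross_in x y a b : chords_cross x y a b ->
  (minn x y < a < maxn x y) \/ (minn x y < b < maxn x y).
Proof. rewrite /chords_cross. timeout 15 lia. Qed.
Lemma cross_betw x y a b : chords_cross x y a b ->
  (minn a b < x < maxn a b) \/ (minn a b < y < maxn a b).
Proof. rewrite /chords_cross. timeout 15 lia. Qed.

Definition MXP (T : finType) (e : rel T) (f : T -> nat) (P : {set T}) :=
  forall x y, x \in P -> y \in P -> x != y -> ~~ e x y ->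
    exists c d, [/\ c \in P, d \in P, e c d & chords_cross (f x) (f y) (f c) (f d)].

Definition NCf (T : finType) (e : rel T) (f : T -> nat) :=
  forall a b c d, e a b -> e c d -> ~~ chords_cross (f a) (f b) (f c) (f d).

Lemma ear (T : finType) (e : rel T) (f : T -> nat) (esym : symmetric e)
  (eirr : irreflexive e) (finj : injective f) (NC : NCf e f)
  (P : {set T}) (hP : 3 <= #|P|) (MX : MXP e f P) :
  exists i j k, [/\ [/\ i \in P, j \in P & k \in P], f i < f k < f j, e i j &
     forall z, z \in P -> f i < f z < f j -> z = k].
Proof.
pose inb x y := [set z in P | f x < f z < f y].
have inbE x y z : (z \in inb x y) = (z \in P) && (f x < f z < f y) by rewrite inE.
clearbody inb.
have fneq a b : a != b -> f a != f b by move=> h; rewrite (inj_eq finj).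
have [p0 Pp0] : exists p, p \in P by apply/card_gt0P; timeout 15 lia.
case: (arg_minnP f Pp0) => x0 Px0 hx0.
have {}Px0 : x0 \in P := Px0.
case: (arg_maxnP f Pp0) => y0 Py0 hy0.
have {}Py0 : y0 \in P := Py0.
have [z0 [Pz0 [nz0x nz0y]]] : exists z, z \in P /\ z != x0 /\ z != y0.
  have h1 := cardsD1 x0 P; have h2 := cardsD1 y0 (P :\ x0); rewrite Px0 in h1.
  have : 0 < #|P :\ x0 :\ y0| by case: (y0 \in P :\ x0) h2; timeout 15 lia.
  case/card_gt0P => z; rewrite !inE => /and3P[? ? ?]; by exists z.
have hz0 := hx0 z0 Pz0; have hz0' := hy0 z0 Pz0.
have f1 := fneq _ _ nz0x; have f2 := fneq _ _ nz0y.
have fxy0 : f x0 < f y0 by timeout 15 lia.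
have exy0 : e x0 y0.
  apply/negPn/negP => nexy.
  have xy : x0 != y0 by apply: contraTneq fxy0 => ->; rewrite ltnn.
  case: (MX x0 y0 Px0 Py0 xy nexy) => c [d [Pc Pd _ cr]].
  have := hx0 c Pc; have := hy0 c Pc; have := hx0 d Pd; have := hy0 d Pd.
  move: cr; rewrite /chords_cross; timeout 15 lia.
pose Q m := [exists x, exists y, [&& x \in P, y \in P, e x y, f x < f y &
   (0 < #|inb x y|) && (#|inb x y| == m)]].
have exQ : exists m, Q m.
  exists #|inb x0 y0|; apply/existsP; exists x0; apply/existsP; exists y0.
  rewrite Px0 Py0 exy0 fxy0 eqxx andbT /=; apply/card_gt0P; exists z0.
  rewrite inbE Pz0 /=; timeout 15 lia.
case: (ex_minnP exQ) => m /existsP[i /existsP[j /and5P[Pi Pj eij fij /andP[gij /eqP gm]]]] mmin.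
have mn x y : x \in P -> y \in P -> e x y -> f x < f y -> 0 < #|inb x y| -> m <= #|inb x y|.
  move=> Px Py exy fxy g; apply: mmin; apply/existsP; exists x; apply/existsP; exists y.
  by rewrite Px Py exy fxy g eqxx.
clear mmin exQ; clearbody Q; clear Q hz0 hz0' f1 f2 fxy0 nz0x nz0y exy0 hx0 hy0.
have ltc x y w : f i <= f x -> f y <= f j -> w \in inb i j -> w \notin inb x y ->
    #|inb x y| < #|inb i j|.
  move=> h1 h2 w1 w2; apply: proper_card; apply/properP; split; last by exists w.
  apply/subsetP => z; rewrite !inbE => /andP[-> hz] /=;  timeout 15 lia.
have m1 : #|inb i j| == 1.
  case: (ltnP 1 #|inb i j|) => h2; last by apply/eqP; timeout 15 lia.
  exfalso.
  have [k0 k0in] : exists k, k \in inb i j by apply/card_gt0P; timeout 15 lia.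
  case: (arg_minnP f k0in) => k kin kmin.
  have {}kin : k \in inb i j := kin.
  move: (kin); rewrite inbE => /andP[Pk /andP[fik fkj]].
  have gkj : 0 < #|inb k j|.
    case/card_gt1P: h2 => z1 [z2 [z1in z2in z12]].
    have [z [zin zk]] : exists z, z \in inb i j /\ z != k.
      case: (eqVneq z1 k) => [ek|nk]; last by exists z1.
      by exists z2; rewrite -ek eq_sym.
    have := kmin z zin; have := fneq _ _ zk; move: (zin); rewrite inbE => /andP[Pz hz] h3 h4.
    apply/card_gt0P; exists z; rewrite inbE Pz /=; move: h3 h4 hz; clear; timeout 15 lia.
  case: (boolP (e k j)) => ekj.
    have := mn k j Pk Pj ekj fkj gkj.
    have nk : k \notin inb k j by rewrite inbE ltnn !andbF.
    have := ltc k j k (ltnW fik) (leqnn _) kin nk.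
    move: gm; clear;     timeout 15 lia.
  have kj : k != j by apply: contraTneq fkj => ->; rewrite ltnn.
  case: (MX k j Pk Pj kj ekj) => c [d [Pc Pd ecd cr]].
  have key c' d' : c' \in P -> d' \in P -> e c' d' -> f k < f c' < f j ->
      (f d' < f k \/ f j < f d') -> False.
    move=> Pc' Pd' ecd' /andP[hc1 hc2] hd.
    have cin : c' \in inb i j by rewrite inbE Pc' /=; move: fik hc1 hc2; clear; timeout 15 lia.
    case: (eqVneq d' i) => [di|ndi].
      subst d'.
      have eic : e i c' by rewrite esym.
      have g : 0 < #|inb i c'| by apply/card_gt0P; exists k; rewrite inbE Pk /=; move: fik hc1 hc2; clear; timeout 15 lia.
      have := mn i c' Pi Pc' eic (ltn_trans fik hc1) g.
      have nc : c' \notin inb i c' by rewrite inbE ltnn !andbF.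
      have := ltc i c' c' (leqnn _) (ltnW hc2) cin nc.
      move: gm; clear;       timeout 15 lia.
    have fdi := fneq _ _ ndi.
    have hout : f d' < f i \/ f j < f d'.
      case: hd => hd; last by right.
      left; case: (ltnP (f i) (f d')) => h; last by move: fdi hd h; clear; timeout 15 lia.
      have din : d' \in inb i j by rewrite inbE Pd' /=; move: fdi hd h fkj fik; clear; timeout 15 lia.
      have := kmin d' din; move: hd h; clear; timeout 15 lia.
    have := NC i j c' d' eij ecd'; move/negP; apply; apply: cross_intro => //; move: hout hc1 hc2 fik; clear; timeout 15 lia.
  case: (cross_cases cr fkj) => [[h hd]|[h hd]].
    exact: (key c d Pc Pd ecd h hd).
  by apply: (key d c Pd Pc _ h hd); rewrite esym.
case/cards1P: m1 => k hk.
have kin : k \in inb i j by rewrite hk set11.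
exists i, j, k; move: kin; rewrite inbE => /andP[Pk fk]; split => //.
move=> z Pz hz; have : z \in inb i j by rewrite inbE Pz hz.
by rewrite hk inE => /eqP.
Qed.


Lemma ear_props (T : finType) (e : rel T) (f : T -> nat) (esym : symmetric e)
  (eirr : irreflexive e) (finj : injective f) (NC : NCf e f)
  (P : {set T}) (MX : MXP e f P) i j k (Pi : i \in P) (Pj : j \in P) (Pk : k \in P)
  (fk : f i < f k < f j) (eij : e i j)
  (uniq : forall z, z \in P -> f i < f z < f j -> z = k) :
  [/\ e k i, e k j, (forall u, u \in P -> e k u -> u = i \/ u = j) & MXP e f (P :\ k)].
Proof.
have fneq a b : a != b -> f a != f b by move=> h; rewrite (inj_eq finj).
have nb a z : (a = i \/ a = j) -> z \in P ->
    (minn (f k) (f a) < f z < maxn (f k) (f a)) \/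
    (minn (f a) (f k) < f z < maxn (f a) (f k)) -> z = k /\ False.
  move=> ha Pz h; case: ha => ?; subst a;
  (have hz : f i < f z < f j by move: h fk; clear; lia);
  have zk := uniq z Pz hz; split => //; subst z; move: h; clear; lia.
have eki : e k i.
  apply/negPn/negP => nki.
  have ki : k != i by apply: contraTneq fk => ->; rewrite ltnn.
  case: (MX k i Pk Pi ki nki) => c [d [Pc Pd _ cr]].
  case: (cross_in cr) => h.
    by case: (nb i c (or_introl erefl) Pc (or_introl h)).
  by case: (nb i d (or_introl erefl) Pd (or_introl h)).
have ekj : e k j.
  apply/negPn/negP => nkj.
  have kj : k != j by apply: contraTneq fk => ->; rewrite ltnn andbF.
  case: (MX k j Pk Pj kj nkj) => c [d [Pc Pd _ cr]].
  case: (cross_in cr) => h.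
    by case: (nb j c (or_intror erefl) Pc (or_introl h)).
  by case: (nb j d (or_intror erefl) Pd (or_introl h)).
have nbr u : u \in P -> e k u -> u = i \/ u = j.
  move=> Pu eku.
  case: (eqVneq u i) => [->|ui]; first by left.
  case: (eqVneq u j) => [->|uj]; first by right.
  exfalso.
  case: (boolP (f i < f u < f j)) => hu.
    by have uk := uniq u Pu hu; subst u; rewrite eirr in eku.
  have h1 := fneq _ _ ui; have h2 := fneq _ _ uj.
  have := NC i j k u eij eku; move/negP; apply; apply: cross_intro => //.
  by move: hu h1 h2; clear; lia.
split => //.
move=> x y; rewrite !inE => /andP[xk Px] /andP[yk Py] xy nexy.
case: (MX x y Px Py xy nexy) => c [d [Pc Pd ecd cr]].
have bad z a : z \in P -> z != k -> (a = i \/ a = j) ->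
    (minn (f k) (f a) < f z < maxn (f k) (f a)) \/
    (minn (f a) (f k) < f z < maxn (f a) (f k)) -> False.
  move=> Pz zk ha h; case: (nb a z ha Pz h) => zk' _.
  by rewrite zk' eqxx in zk.
case: (eqVneq c k) => [ck|ck].
  subst c; have hd := nbr d Pd ecd.
  case: (cross_betw cr) => h.
    exfalso; exact: (bad x d Px xk hd (or_introl h)).
  exfalso; exact: (bad y d Py yk hd (or_introl h)).
case: (eqVneq d k) => [dk|dk].
  subst d; have hc : c = i \/ c = j by apply: nbr Pc _; rewrite esym.
  case: (cross_betw cr) => h.
    exfalso; exact: (bad x c Px xk hc (or_intror h)).
  exfalso; exact: (bad y c Py yk hc (or_intror h)).
by exists c, d; rewrite !inE ck dk Pc Pd.
Qed.

Definition good_col (T : finType) (e : rel T) (P : {set T}) (c : T -> nat) :=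
  [/\ forall v, v \in P -> c v < 3,
      forall u v, u \in P -> v \in P -> e u v -> c u != c v &
      forall v kk, v \in P -> kk < 3 -> kk != c v ->
        exists u, [/\ u \in P, e v u & c u = kk]].

Lemma coloring (T : finType) (e : rel T) (f : T -> nat) (esym : symmetric e)
  (eirr : irreflexive e) (finj : injective f) (NC : NCf e f) n :
  forall P : {set T}, #|P| = n.+3 -> MXP e f P -> exists c, good_col e P c.
Proof.
elim: n => [|n IH] P hP MX;
  (have hP3 : 3 <= #|P| by rewrite hP);
  (have [i [j [k [[Pi Pj Pk] fk eij uniq]]]] := ear esym eirr finj NC hP3 MX);
  (have [eki ekj nbr MX'] := ear_props esym eirr finj NC MX Pi Pj Pk fk eij uniq);
  (have fneq a b : f a != f b -> a != b by apply: contra => /eqP ->);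
  (have ij : i != j by apply: fneq; move: fk; clear; lia);
  (have ik : i != k by apply: fneq; move: fk; clear; lia);
  (have jk : j != k by apply: fneq; move: fk; clear; lia);
  (have Pi' : i \in P :\ k by rewrite !inE ik);
  (have Pj' : j \in P :\ k by rewrite !inE jk);
  have h1 := cardsD1 k P; rewrite Pk hP in h1.
  (have ji : j != i by rewrite eq_sym);
  (have ki : k != i by rewrite eq_sym);
  (have kj : k != j by rewrite eq_sym);
  (have eik : e i k by rewrite esym);
  (have ejk : e j k by rewrite esym);
  (have eji : e j i by rewrite esym);
  rewrite /= in h1.
  have h2 := cardsD1 i (P :\ k); rewrite Pi' /= in h2.
  have Pj'' : j \in P :\ k :\ i by rewrite !inE ji jk Pj.
  have h3 := cardsD1 j (P :\ k :\ i); rewrite Pj'' /= in h3.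
  have e0 : P :\ k :\ i :\ j = set0 by apply: cards0_eq; move: h1 h2 h3; clear; lia.
  have all3 v : v \in P -> [\/ v = i, v = j | v = k].
    move=> Pv; case: (eqVneq v k) => [->|vk]; first by constructor 3.
    case: (eqVneq v i) => [->|vi]; first by constructor 1.
    case: (eqVneq v j) => [->|vj]; first by constructor 2.
    have : v \in P :\ k :\ i :\ j by rewrite !inE vk vi vj Pv.
    by rewrite e0 inE.
  exists (fun v => if v == i then 0 else if v == j then 1 else 2).
  split.
  - by move=> v _; case: ifP => _ //; case: ifP.
  - move=> u v Pu Pv /=; case: (all3 u Pu) => ->; case: (all3 v Pv) => ->;
      rewrite ?eirr // ?eqxx ?(negbTE ij) ?(negbTE ji) ?(negbTE ik)
        ?(negbTE ki) ?(negbTE jk) ?(negbTE kj) //.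
  - move=> v kk Pv; case: (all3 v Pv) => -> /=;
      rewrite ?eqxx ?(negbTE ij) ?(negbTE ji) ?(negbTE ik)
        ?(negbTE ki) ?(negbTE jk) ?(negbTE kj);
      case: kk => [|[|[|kk]]] //= _ _;
      solve [ exists i; split => //=; rewrite ?eqxx ?(negbTE ij) ?(negbTE ji) ?(negbTE ik) ?(negbTE ki) ?(negbTE jk) ?(negbTE kj) //
            | exists j; split => //=; rewrite ?eqxx ?(negbTE ij) ?(negbTE ji) ?(negbTE ik) ?(negbTE ki) ?(negbTE jk) ?(negbTE kj) //
            | exists k; split => //=; rewrite ?eqxx ?(negbTE ij) ?(negbTE ji) ?(negbTE ik) ?(negbTE ki) ?(negbTE jk) ?(negbTE kj) // ].
have h1' : #|P :\ k| = n.+3 by move: h1; clear; lia.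
have [c' [cb cp cr]] := IH _ h1' MX'.
have ci := cb i Pi'; have cj := cb j Pj'; have cij := cp i j Pi' Pj' eij.
exists (fun v => if v == k then 3 - c' i - c' j else c' v).
split.
- move=> v Pv /=; case: ifP => vk; first by move: ci cj cij; clear; lia.
  by apply: cb; rewrite !inE vk Pv.
- move=> u v Pu Pv euv /=.
  case: (eqVneq u k) => [uk|uk].
    subst u; have [->|->] := nbr v Pv euv; rewrite ?(negbTE ik) ?(negbTE jk) ?eqxx;
      move: ci cj cij; clear; lia.
  case: (eqVneq v k) => [vk|vk].
    subst v; have := nbr u Pu; rewrite esym => /(_ euv) [->|->];
      rewrite ?(negbTE ik) ?(negbTE jk) ?eqxx; move: ci cj cij; clear; lia.
  by apply: cp; rewrite ?inE ?uk ?vk.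
- move=> v kk Pv hk /=.
  case: (eqVneq v k) => [vk|vk].
    subst v => hne.
    have : kk = c' i \/ kk = c' j by move: ci cj cij hk hne; clear; lia.
    case=> ->; [exists i | exists j]; rewrite ?(negbTE ik) ?(negbTE jk); split => //.
  move=> hne.
  have Pv' : v \in P :\ k by rewrite !inE vk Pv.
  have [u [Pu evu cu]] := cr v kk Pv' hk hne.
  exists u; move: Pu; rewrite !inE => /andP[uk Pu]; by rewrite (negbTE uk).
Qed.

Theorem corollary3p3 (T : finType) (e : rel T)
  (e_sym : symmetric e) (e_irr : irreflexive e)
  (hn : 3 <= #|T|) (hG : maximal_outerplanar e) :
  double_domination_number e <= (2 * #|T|) %/ 3.
Proof.
case: hG => [[f [finj NC0]] hmax].
have NC : NCf e f := NC0.
have MX : MXP e f setT.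
  move=> x y _ _ xy nexy.
  case: (boolP [exists c, exists d, e c d && chords_cross (f x) (f y) (f c) (f d)]).
    by case/existsP => c /existsP[d /andP[ecd cr]]; exists c, d; rewrite !inE.
  move=> hno; exfalso; apply: (hmax x y xy nexy).
  have hno' c d : e c d -> ~~ chords_cross (f x) (f y) (f c) (f d).
    move=> ecd; apply/negP => cr; move/negP: hno; apply; apply/existsP; exists c.
    by apply/existsP; exists d; rewrite ecd cr.
  exists f; split => // a b c d; rewrite /add_edge.
  case/or3P => [eab|/andP[/eqP-> /eqP->]|/andP[/eqP-> /eqP->]];
  case/or3P => [ecd|/andP[/eqP-> /eqP->]|/andP[/eqP-> /eqP->]].
  - exact: NC0 _ _ _ _ eab ecd.
  - rewrite cross_sym; exact: hno' _ _ eab.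
  - rewrite cross_sym cross_swap; exact: hno' _ _ eab.
  - exact: hno' _ _ ecd.
  - exact: (cross_same _ _).1.
  - exact: (cross_same _ _).2.
  - rewrite cross_swap; exact: hno' _ _ ecd.
  - exact: (cross_same _ _).2.
  - exact: (cross_same _ _).1.
have hc : #|[set: T]| = (#|T| - 3).+3 by rewrite cardsT; lia.
have [c [cb cp cr]] := coloring e_sym e_irr finj NC hc MX.
pose N k := #|[set v | c v == k]|.
have hsum : #|T| <= N 0 + N 1 + N 2.
  rewrite -cardsT.
  have : [set: T] \subset [set v | c v == 0] :|: [set v | c v == 1] :|: [set v | c v == 2].
    apply/subsetP => v _; have := cb v (in_setT v); rewrite !inE.
    by case: (c v) => [|[|[|]]].
  move/subset_leq_card => h; apply: leq_trans h _.
  rewrite !cardsU /N; lia.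
have [m [m3 hm]] : exists m, m < 3 /\ forall k, k < 3 -> N k <= N m.
  have : N 1 <= N 0 /\ N 2 <= N 0 \/ N 0 <= N 1 /\ N 2 <= N 1 \/ N 0 <= N 2 /\ N 1 <= N 2.
    move: (N 0) (N 1) (N 2); clear; lia.
  case=> [[h1 h2]|[[h1 h2]|[h1 h2]]]; [exists 0|exists 1|exists 2]; split => //;
    case=> [|[|[|]]] //.
have [k1 [k2 [k13 k23 k1m k2m k12]]] : exists k1 k2,
    [/\ k1 < 3, k2 < 3, k1 != m, k2 != m & k1 != k2].
  by case: m m3 {hm} => [|[|[|]]] // _; [exists 1, 2 | exists 0, 2 | exists 0, 1].
pose S := [set v | c v != m].
have dd : double_dominating e S.
  apply/forallP => v; apply/card_gt1P.
  case: (eqVneq (c v) m) => cvm.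
    have k1v : k1 != c v by rewrite cvm.
    have k2v : k2 != c v by rewrite cvm.
    have [u1 [_ evu1 cu1]] := cr v k1 (in_setT v) k13 k1v.
    have [u2 [_ evu2 cu2]] := cr v k2 (in_setT v) k23 k2v.
    exists u1, u2; rewrite /closed_nbhd !inE evu1 evu2 cu1 cu2 !orbT k1m k2m; split => //.
    by apply: contraNneq k12 => h; rewrite -cu1 -cu2 h.
  have [k [k3 km kv]] : exists k, [/\ k < 3, k != m & k != c v].
    case: (eqVneq k1 (c v)) => h; last by exists k1.
    by exists k2; split => //; rewrite -h eq_sym.
  have [u [_ evu cu]] := cr v k (in_setT v) k3 kv.
  exists v, u; rewrite /closed_nbhd !inE eqxx evu cu cvm km orbT; split => //.
  by apply: contraNneq kv => h; rewrite -cu h.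
apply: (@leq_trans #|S|).
  have key (r : seq {set T}) : S \in r ->
      \big[minn/#|T|]_(X <- r | double_dominating e X) #|X| <= #|S|.
    elim: r => [|X r IHr] //; rewrite inE big_cons => /orP[/eqP <-|Sr].
      by rewrite dd geq_minl.
    by case: ifP => _; [rewrite geq_min IHr ?orbT | exact: IHr].
  exact: key _ (mem_index_enum S).
have hS : N m + #|S| = #|T|.
  rewrite -(cardsC [set v | c v == m]) /N; congr (_ + _); apply: eq_card => v.
  by rewrite !inE.
rewrite leq_divRL //.
have := hm 0 isT; have := hm 1 isT; have := hm 2 isT.
move: hS hsum; clear; lia.
Qed.
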